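(* Let $N\geq 3$ be a prime integer and let $q\in\mathbb{C}$ satisfy $q^N=1$, $q\neq 1$. Let $X\subset\mathbb{R}^{N-1}$ be a nonempty convex subspace. Then the index map $\eta:(C^q_*(X),\partial)\to(\mathbb{Z}[q],[*]_q)$ induces an isomorphism in amplitude homology; that is, for every amplitude $1\leq m\leq N-1$ and every degree $n\in\mathbb{Z}$, the induced map $H_{m,n}(C^q_*(X))\to H_{m,n}(\mathbb{Z}[q],[*]_q)$ is an isomorphism of $\mathbb{Z}[q]$-modules.
   Context: $q$-numbers: $[k]_q=1+q+\cdots+q^{k-1}$ for $k\geq 1$. Singular $q$-chains: for a topological space $X$, $C^q_n(X)$ is the free $\mathbb{Z}[q]$-module with basis the continuous maps $\sigma:\Delta^n\to X$ (singular $n$-simplices), where $\Delta^n\subset\mathbb{R}^{n+1}$ is the convex hull of the standard basis $e_0,\dots,e_n$; $C^q_n(X)=0$ for $n<0$. For $0\leq j\leq n$, the $j$-th face of an $n$-simplex $\sigma$ ($n\geq 1$) is $\partial_j\sigma=\sigma\circ\lambda_j$, where $\lambda_j:\Delta^{n-1}\to\Delta^n$ is the affine map sending $e_0,\dots,e_{n-1}$ in order to $e_0,\dots,\widehat{e_j},\dots,e_n$. The border map $\partial:C^q_n(X)\to C^q_{n-1}(X)$ is the linear map $\partial=\sum_{j=0}^n q^j\partial_j$ for $n\ge1$, and $\partial=0$ on $C^q_0(X)$; one has $\partial^N=0$. Amplitude homology: for a graded module $M_*$ with a degree $-1$ endomorphism $\partial$ satisfying $\partial^N=0$, and $1\leq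 m\leq N-1$, $H_{m,n}(M)=\ker(\partial^m:M_n\to M_{n-m})/\operatorname{im}(\partial^{N-m}:M_{n+N-m}\to M_n)$. The $N$-complex $(\mathbb{Z}[q],[*]_q)$ has $\mathbb{Z}[q]$ in each degree $0\leq n\leq N-2$ and $0$ in all other degrees, with differential from degree $n$ to degree $n-1$ given by multiplication by $[n+1]_q$ for $1\leq n\leq N-2$ (and zero otherwise). The index map $\eta$ is the $\mathbb{Z}[q]$-linear graded map sending each singular $n$-simplex to $1\in\mathbb{Z}[q]$ in degree $n$ for $0\leq n\leq N-2$, and sending $C^q_n(X)$ to $0$ for $n\geq N-1$; it commutes with the differentials. *)

(* Defs.v *)
From HB Require Import structures.
From mathcomp Require Import all_boot all_order all_algebra.
From mathcomp Require Import boolp classical_sets reals topology normedtype.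
From mathcomp Require Import Rstruct Rstruct_topology.
From mathcomp Require Import complex.

Set Implicit Arguments.
Unset Strict Implicit.
Unset Printing Implicit Defensive.
Import Order.TTheory GRing.Theory Num.Theory.
Import numFieldNormedType.Exports.
Local Open Scope classical_set_scope.
Local Open Scope ring_scope.

Notation RR := Rdefinitions.R.
Notation CC := (complex.complex RR).

Definition inZq (q z : CC) : Prop :=
  exists p : {poly int}, z = (map_poly (fun k : int => k%:~R) p).[q].

Definition qnum (q : CC) (k : nat) : CC := \sum_(i < k) q ^+ i.

Definition stdsimplex (n : nat) : set 'rV[RR]_n.+1 :=
  [set x | (forall i, 0 <= x ord0 i) /\ \sum_i x ord0 i = 1].
Arguments stdsimplex : clear implicits.

(* lambda_j : Delta^(n-1) -> Delta^n, the affine (here: linear) map sending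
   e_0..e_(n-1) in order to e_0,..,^e_j,..,e_n (j : 'I_(n.+2), domain R^(n+1)). *)
Definition facemap (n : nat) (j : 'I_n.+2) (x : 'rV[RR]_n.+1) : 'rV[RR]_n.+2 :=
  \row_k (match unlift j k with Some k' => x ord0 k' | None => 0 end).

(* A singular n-simplex in X (X a subset of R^d) is a continuous map
   Delta^n -> X.  We represent it by a total function on R^(n+1) that is
   continuous on Delta^n, maps Delta^n into X, and is normalised to 0 outside
   Delta^n (so that singular simplices correspond bijectively to such
   functions). *)
Definition is_sing_simplex (d n : nat) (X : set 'rV[RR]_d)
    (f : 'rV[RR]_n.+1 -> 'rV[RR]_d) : Prop :=
  {within stdsimplex n, continuous f} /\
  (forall x, stdsimplex n x -> X (f x)) /\
  (forall x, ~ stdsimplex n x -> f x = 0).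

Definition simplex (d : nat) := {n : nat & 'rV[RR]_n.+1 -> 'rV[RR]_d}.
Definition sdeg d (s : simplex d) : nat := projT1 s.

Definition restrict (d n : nat) (g : 'rV[RR]_n.+1 -> 'rV[RR]_d) :
    'rV[RR]_n.+1 -> 'rV[RR]_d :=
  fun x => if `[< stdsimplex n x >] then g x else 0.

Definition face (d n : nat) (f : 'rV[RR]_n.+2 -> 'rV[RR]_d) (j : 'I_n.+2) :
    'rV[RR]_n.+1 -> 'rV[RR]_d :=
  restrict (fun x => f (facemap j x)).

(* A chain is a finite formal Z[q]-combination of simplices, presented as a
   list of (coefficient, simplex) pairs; two presentations denote the same
   element of the free module iff they have the same coefficient function. *)
Definition chain (d : nat) := seq (CC * simplex d).

Definition coef d (c : chain d) (s : simplex d) : CC :=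
  \sum_(p <- c) (if `[< p.2 = s >] then p.1 else 0).

Definition chain_eq d (c c' : chain d) : Prop := forall s, coef c s = coef c' s.

(* c presents an element of C^q_n(X), n an integer (C^q_n = 0 for n < 0) *)
Definition in_C (q : CC) (d : nat) (X : set 'rV[RR]_d) (n : int) (c : chain d)
  : Prop :=
  forall p, p \in c ->
    inZq q p.1 /\ (sdeg p.2)%:Z = n /\ is_sing_simplex X (projT2 p.2).

Definition bd_simplex (q : CC) d (a : CC) (s : simplex d) : chain d :=
  let: existT n f := s in
  match n return ('rV[RR]_n.+1 -> 'rV[RR]_d) -> chain d with
  | 0 => fun _ => [::]
  | n'.+1 => fun f =>
      [seq (a * q ^+ (nat_of_ord j), existT _ n' (face f j)) | j : 'I_n'.+2]
  end f.

Definition bd (q : CC) d (c : chain d) : chain d :=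
  flatten [seq bd_simplex q p.1 p.2 | p <- c].

Definition in_T (N : nat) (q : CC) (n : int) (a : CC) : Prop :=
  inZq q a /\ (~ (0 <= n <= (N - 2)%:Z)%R -> a = 0).

Definition tdiff (N : nat) (q : CC) (k : int) (a : CC) : CC :=
  if (1 <= k <= (N - 2)%:Z)%R then qnum q (absz k).+1 * a else 0.

Fixpoint tpow (N : nat) (q : CC) (m : nat) (n : int) (a : CC) : CC :=
  match m with
  | 0 => a
  | m'.+1 => tpow N q m' (n - 1) (tdiff N q n a)
  end.

Definition eta (N : nat) d (n : int) (c : chain d) : CC :=
  if (0 <= n <= (N - 2)%:Z)%R then \sum_(p <- c) p.1 else 0.

Definition C_cycle (q : CC) d (X : set 'rV[RR]_d) (m : nat) (n : int)
    (c : chain d) : Prop :=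
  in_C q X n c /\ chain_eq (iter m (@bd q d) c) [::].

Definition C_boundary (N : nat) (q : CC) d (X : set 'rV[RR]_d) (m : nat)
    (n : int) (c : chain d) : Prop :=
  in_C q X n c /\
  exists e, in_C q X (n + (N - m)%:Z) e /\ chain_eq (iter (N - m) (@bd q d) e) c.

Definition T_cycle (N : nat) (q : CC) (m : nat) (n : int) (a : CC) : Prop :=
  in_T N q n a /\ tpow N q m n a = 0.

Definition T_boundary (N : nat) (q : CC) (m : nat) (n : int) (a : CC) : Prop :=
  in_T N q n a /\
  exists b, in_T N q (n + (N - m)%:Z) b /\ tpow N q (N - m) (n + (N - m)%:Z) b = a.

(* The map H_{m,n}(C^q(X)) -> H_{m,n}(Z[q],[*]_q), [c] |-> [eta c], is
   bijective: injective (a cycle whose image is a boundary is a boundary) and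
   surjective (every cycle class is hit).  Z[q]-linearity and
   well-definedness are automatic since eta is a Z[q]-linear chain map. *)
Definition eta_homology_iso (N : nat) (q : CC) d (X : set 'rV[RR]_d)
    (m : nat) (n : int) : Prop :=
  (forall c, C_cycle q X m n c -> T_boundary N q m n (eta N n c) ->
     C_boundary N q X m n c) /\
  (forall a, T_cycle N q m n a ->
     exists c, C_cycle q X m n c /\ T_boundary N q m n (eta N n c - a)).

Definition convex_set d (X : set 'rV[RR]_d) : Prop :=
  forall x y (t : RR), X x -> X y -> 0 <= t <= 1 -> X (t *: x + (1 - t) *: y).

(* Main.v *)
Require Import Defs.
From HB Require Import structures.
From mathcomp Require Import all_boot all_order all_algebra.
From mathcomp Require Import boolp classical_sets reals topology normedtype.
From mathcomp Require Import Rstruct Rstruct_topology.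
From mathcomp Require Import complex.
From mathcomp Require Import ring lra zify.
Import Order.TTheory GRing.Theory Num.Theory Num.Def.
Local Open Scope classical_set_scope.
Local Open Scope ring_scope.
Set Implicit Arguments.
Unset Strict Implicit.
Unset Printing Implicit Defensive.
Require Import Defs.

Lemma rV_normE n (x : 'rV[RR]_n) : `|x| = \big[maxr/0]_ij `|x ij.1 ij.2|.
Proof. by rewrite [LHS]/normr /= mx_normrE. Qed.

Lemma rV_ballP n (x y : 'rV[RR]_n) e : 0 < e ->
  ball x e y <-> forall i, `|x ord0 i - y ord0 i| < e.
Proof.
move=> e0; rewrite -ball_normE /ball_ /= rV_normE; split.
  move=> /bigmax_ltP [_ h] i; have := h (ord0, i) isT; by rewrite !mxE.
move=> h; apply/bigmax_ltP; split => // -[i j] _ /=; rewrite !mxE.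
by rewrite (ord1 i); exact: h.
Qed.

Lemma coord_le_norm n (x : 'rV[RR]_n) i : `|x ord0 i| <= `|x|.
Proof. rewrite rV_normE; apply: (le_bigmax _ _ (ord0, i)). Qed.

Definition edcont n d (A : set 'rV[RR]_n) (f : 'rV[RR]_n -> 'rV[RR]_d) :=
 forall x, A x -> forall e : RR, 0 < e -> exists2 del : RR, 0 < del &
   forall y, A y -> (forall i, `|x ord0 i - y ord0 i| < del) ->
     forall k, `|f x ord0 k - f y ord0 k| < e.

Lemma edcontP n d (A : set 'rV[RR]_n) (f : 'rV[RR]_n -> 'rV[RR]_d) :
  {within A, continuous f} <-> edcont A f.
Proof.
rewrite subspace_continuousP; split.
  move=> h x Ax e e0; have /cvg_ballP/(_ e e0) := h x Ax.
  move=> hw; move: hw; rewrite /within /prop_near1 /= => /nbhs_ballP [del del0 hb].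
  exists del => // y Ay hy k.
  have /rV_ballP := hb y ((rV_ballP _ _ del0).2 hy) Ay.
  by move=> /(_ e0); apply.
move=> h x Ax; apply/cvg_ballP => e e0.
have [del del0 hd] := h x Ax e e0.
rewrite /within /prop_near1 /=; apply/nbhs_ballP; exists del => // y /rV_ballP.
move=> /(_ del0) hy Ay; apply/rV_ballP => //; exact: hd.
Qed.

Lemma restrictE d n (g : 'rV[RR]_n.+1 -> 'rV[RR]_d) x :
  stdsimplex n x -> Defs.restrict g x = g x.
Proof. by move=> h; rewrite /Defs.restrict asboolT. Qed.

Lemma restrictN d n (g : 'rV[RR]_n.+1 -> 'rV[RR]_d) x :
  ~ stdsimplex n x -> Defs.restrict g x = 0.
Proof. by move=> h; rewrite /Defs.restrict asboolF. Qed.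

Lemma facemap_j n (j : 'I_n.+2) (x : 'rV[RR]_n.+1) : facemap j x ord0 j = 0.
Proof. by rewrite /facemap mxE unlift_none. Qed.

Lemma facemap_lift n (j : 'I_n.+2) (x : 'rV[RR]_n.+1) i :
  facemap j x ord0 (lift j i) = x ord0 i.
Proof. by rewrite /facemap mxE liftK. Qed.

Lemma facemap_simplex n (j : 'I_n.+2) x :
  stdsimplex n x -> stdsimplex n.+1 (facemap j x).
Proof.
move=> [x0 x1]; split.
  move=> k; case: (unliftP j k) => [i ->|->]; first by rewrite facemap_lift.
  by rewrite facemap_j.
rewrite (bigD1_ord j) //= facemap_j add0r -x1; apply: eq_bigr => i _.
by rewrite facemap_lift.
Qed.

Lemma facemapZ n (j : 'I_n.+2) (c : RR) x : facemap j (c *: x) = c *: facemap j x.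
Proof.
apply/rowP => k; rewrite !mxE; case: (unlift j k) => [i|]; rewrite ?mxE ?mulr0 //.
Qed.

Lemma simplex_ge0 n x i : stdsimplex n x -> 0 <= x ord0 i.
Proof. by case. Qed.

Lemma simplex_le1 n x i : stdsimplex n x -> x ord0 i <= 1.
Proof.
move=> [x0 x1]; rewrite -x1 (bigD1 i) //= lerDl; apply: sumr_ge0 => k _; exact: x0.
Qed.

Lemma facemap_close n (j : 'I_n.+2) (x y : 'rV[RR]_n.+1) (del : RR) : 0 < del ->
  (forall i, `|x ord0 i - y ord0 i| < del) ->
  forall k, `|facemap j x ord0 k - facemap j y ord0 k| < del.
Proof.
move=> d0 h k; case: (unliftP j k) => [i ->|->]; first by rewrite !facemap_lift.
by rewrite !facemap_j subrr normr0.
Qed.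

Lemma face_sing d n (X : set 'rV[RR]_d) (f : 'rV[RR]_n.+2 -> 'rV[RR]_d) j :
  is_sing_simplex X f -> is_sing_simplex X (face f j).
Proof.
move=> [fc [fX fN]]; split; last split.
- apply/edcontP => x Dx e e0.
  have [del del0 hd] := (edcontP _ _).1 fc _ (facemap_simplex j Dx) e e0.
  exists del => // y Dy hy k; rewrite /face !restrictE //.
  apply: hd; first exact: facemap_simplex.
  exact: facemap_close.
- by move=> x Dx; rewrite /face restrictE //; apply: fX; exact: facemap_simplex.
- by move=> x Dx; rewrite /face restrictN.
Qed.

Definition kap d n (x0 : 'rV[RR]_d) : 'rV[RR]_n.+1 -> 'rV[RR]_d :=
  Defs.restrict (fun _ => x0).

Lemma kap_sing d n (X : set 'rV[RR]_d) x0 : X x0 -> is_sing_simplex X (@kap d n x0).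
Proof.
move=> Xx0; split; last split.
- apply/edcontP => x Dx e e0; exists 1 => // y Dy _ k.
  by rewrite /kap !restrictE // subrr normr0.
- by move=> x Dx; rewrite /kap restrictE.
- by move=> x Dx; rewrite /kap restrictN.
Qed.

Lemma face_kap d n (x0 : 'rV[RR]_d) j : face (@kap d n.+1 x0) j = @kap d n x0.
Proof.
apply/funext => x; rewrite /face /kap.
case: (pselect (stdsimplex n x)) => Dx.
  by rewrite !restrictE //; exact: facemap_simplex.
by rewrite !restrictN.
Qed.
Lemma simplex_bounded n : bounded_set (stdsimplex n).
Proof.
exists 1; split; first by rewrite num_real.
move=> M M1 x Dx /=; rewrite rV_normE; apply: le_trans (ltW M1).
apply/bigmax_leP; split => // -[i j] _ /=; rewrite (ord1 i).
by rewrite ger0_norm ?simplex_le1 ?simplex_ge0.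
Qed.

Lemma small_eq0 (a : RR) (K : RR) : 0 < K -> (forall e : RR, 0 < e -> `|a| <= K * e) -> a = 0.
Proof.
move=> K0 h; apply/eqP; rewrite -normr_eq0; apply/negPn/negP => a0.
have ap : 0 < `|a| by rewrite lt_def a0 normr_ge0.
have := h (`|a| / (2 * K)) (divr_gt0 ap (mulr_gt0 (ltr0Sn _ 1) K0)).
have -> : K * (`|a| / (2 * K)) = `|a| / 2.
  by field; rewrite gt_eqF.
lra.
Qed.

Lemma simplex_closed n : closed (stdsimplex n).
Proof.
move=> x cx.
have near : forall e : RR, 0 < e -> exists y, stdsimplex n y /\ forall i, `|x ord0 i - y ord0 i| < e.
  move=> e e0; have [y [Dy By]] := cx _ (nbhsx_ballx x e e0).
  by exists y; split => //; apply/rV_ballP.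
split.
  move=> i; rewrite leNgt; apply/negP => xi.
  have [y [Dy hy]] := near (- x ord0 i) (ltac:(lra)).
  have := hy i; have := simplex_ge0 i Dy; rewrite ltr_norml; lra.
apply/eqP; rewrite -subr_eq0; apply/eqP; apply: (@small_eq0 _ (n.+1)%:R) => // e e0.
have [y [[_ Dy] hy]] := near e e0.
rewrite -{1}Dy -sumrB.
apply: le_trans (ler_norm_sum _ _ _) _.
apply: (@le_trans _ _ (\sum_(i < n.+1) e)).
  by apply: ler_sum => i _; exact: ltW.
by rewrite sumr_const card_ord mulr_natl.
Qed.

Lemma sing_bound d n (X : set 'rV[RR]_d) (f : 'rV[RR]_n.+1 -> 'rV[RR]_d) :
  is_sing_simplex X f -> exists M : RR, 0 <= M /\ forall y k, `|f y ord0 k| <= M.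
Proof.
move=> [fc [_ fN]].
have cpt : compact (f @` stdsimplex n).
  apply: continuous_compact => //; apply: bounded_closed_compact.
    exact: simplex_bounded.
  exact: simplex_closed.
have [M [Mr HM]] := compact_bounded cpt.
exists (`|M| + 1); split; first by rewrite addr_ge0.
move=> y k; case: (pselect (stdsimplex n y)) => Dy; last first.
  by rewrite fN // mxE normr0 addr_ge0.
have : `|f y| <= `|M| + 1.
  apply: (HM (`|M| + 1)); last by exists y.
  by apply: le_lt_trans (real_ler_norm Mr) _; rewrite ltrDl.
exact/le_trans/coord_le_norm.
Qed.

Lemma quot_close (a b be be' del : RR) : 0 <= a <= 1 -> 0 < be <= 1 -> be / 2 <= be' ->
  `|a - b| < del -> `|be - be'| < del -> `|a / be - b / be'| <= 4 * del / (be * be).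
Proof.
move=> /andP[a0 a1] /andP[b0 b1] hb hab hbb.
have b'0 : 0 < be' by lra.
have -> : a / be - b / be' = (a * (be' - be) + be * (a - b)) / (be * be').
  by field; rewrite !gt_eqF.
rewrite normrM [`|(_ * _)^-1|]ger0_norm; last by rewrite invr_ge0 mulr_ge0 ?ltW.
have h1 : `|a * (be' - be) + be * (a - b)| <= 2 * del.
  apply: le_trans (ler_normD _ _) _; rewrite !normrM (ger0_norm a0) (ger0_norm (ltW b0)).
  rewrite distrC in hbb.
  have := normr_ge0 (be' - be); have := normr_ge0 (a - b).
  have := ler_wpM2r (normr_ge0 (be' - be)) a1.
  have := ler_wpM2r (normr_ge0 (a - b)) b1.
  lra.
have h2 : (be * be') ^-1 <= 2 / (be * be).
  rewrite -subr_ge0.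
  have -> : 2 / (be * be) - (be * be')^-1 = (2 * be' - be) / (be * be * be').
    by field; rewrite !gt_eqF.
  apply: divr_ge0; first lra.
  by rewrite !mulr_ge0 ?ltW.
have d0 : 0 <= del by have := normr_ge0 (a - b); lra.
have : `|a * (be' - be) + be * (a - b)| * (be * be')^-1 <= 2 * del * (2 / (be * be)).
  apply: ler_pM => //; first by rewrite invr_ge0 mulr_ge0 ?ltW.
move=> h; apply: (le_trans h); rewrite le_eqVlt; apply/orP; left; apply/eqP; ring.
Qed.

Definition tl n (s : 'rV[RR]_n.+2) : 'rV[RR]_n.+1 := \row_i s ord0 (lift ord0 i).

Definition gmap n (s : 'rV[RR]_n.+2) : 'rV[RR]_n.+1 := (1 - s ord0 ord0)^-1 *: tl s.

Definition coneG d n (x0 : 'rV[RR]_d) (f : 'rV[RR]_n.+1 -> 'rV[RR]_d) (s : 'rV[RR]_n.+2) :=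
  s ord0 ord0 *: x0 + (1 - s ord0 ord0) *: f (gmap s).

Definition coneF d n (x0 : 'rV[RR]_d) (f : 'rV[RR]_n.+1 -> 'rV[RR]_d) :
  'rV[RR]_n.+2 -> 'rV[RR]_d := Defs.restrict (coneG x0 f).

Lemma sum_tl n (s : 'rV[RR]_n.+2) :
  \sum_i s ord0 i = s ord0 ord0 + \sum_i tl s ord0 i.
Proof. by rewrite big_ord_recl; congr (_ + _); apply: eq_bigr => i _; rewrite mxE. Qed.

Lemma gmap_simplex n (s : 'rV[RR]_n.+2) :
  stdsimplex n.+1 s -> s ord0 ord0 != 1 -> stdsimplex n (gmap s).
Proof.
move=> Ds s1; have s0le := simplex_le1 ord0 Ds.
have b0 : 0 < 1 - s ord0 ord0.
  by rewrite subr_gt0 lt_def eq_sym s1 s0le.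
split.
  move=> i; rewrite !mxE; apply: mulr_ge0; first by rewrite invr_ge0 ltW.
  exact: simplex_ge0.
have := Ds.2; rewrite sum_tl => h.
rewrite (eq_bigr (fun i => (1 - s ord0 ord0)^-1 * tl s ord0 i)); last first.
  by move=> i _; rewrite mxE.
rewrite -mulr_sumr.
have -> : \sum_i tl s ord0 i = 1 - s ord0 ord0 by rewrite -h; ring.
by rewrite mulVf ?gt_eqF.
Qed.

Lemma coneF_X d n (X : set 'rV[RR]_d) x0 (f : 'rV[RR]_n.+1 -> 'rV[RR]_d) :
  convex_set X -> X x0 -> is_sing_simplex X f ->
  forall s, stdsimplex n.+1 s -> X (coneF x0 f s).
Proof.
move=> cX Xx0 [_ [fX _]] s Ds; rewrite /coneF restrictE // /coneG.
case: (eqVneq (s ord0 ord0) 1) => [->|s1].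
  by rewrite subrr scale0r scale1r addr0.
apply: cX => //; first by apply: fX; exact: gmap_simplex.
by rewrite simplex_ge0 ?simplex_le1.
Qed.

Lemma coneG_coord d n (x0 : 'rV[RR]_d) (f : 'rV[RR]_n.+1 -> 'rV[RR]_d) t k :
  coneG x0 f t ord0 k = t ord0 ord0 * x0 ord0 k + (1 - t ord0 ord0) * f (gmap t) ord0 k.
Proof. by rewrite /coneG !mxE. Qed.

Lemma gmap_coord n (t : 'rV[RR]_n.+2) i :
  gmap t ord0 i = t ord0 (lift ord0 i) / (1 - t ord0 ord0).
Proof. by rewrite /gmap !mxE mulrC. Qed.

Lemma coneF_cont d n (X : set 'rV[RR]_d) x0 (f : 'rV[RR]_n.+1 -> 'rV[RR]_d) :
  is_sing_simplex X f -> {within stdsimplex n.+1, continuous (coneF x0 f)}.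
Proof.
move=> fs; have [M [M0 HM]] := sing_bound fs.
have ef := (edcontP _ _).1 fs.1.
apply/edcontP => s Ds e e0.
set Mx := `|x0|.
have hx : forall k, `|x0 ord0 k| <= Mx by move=> k; exact: coord_le_norm.
have Mx0 : 0 <= Mx by exact: normr_ge0.
have K0 : 0 < Mx + M + 1 by lra.
have s0le := simplex_le1 ord0 Ds.
have s0ge := simplex_ge0 ord0 Ds.
case: (eqVneq (s ord0 ord0) 1) => [s1|s1].
  exists (e / (Mx + M + 1)); first by rewrite divr_gt0.
  move=> t Dt ht k; rewrite /coneF !restrictE // !coneG_coord s1.
  have := ht ord0; rewrite s1 => h0.
  set u := t ord0 ord0; set ft := f (gmap t) ord0 k.
  have -> : 1 * x0 ord0 k + (1 - 1) * f (gmap s) ord0 k - (u * x0 ord0 k + (1 - u) * ft)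
     = (1 - u) * (x0 ord0 k - ft) by ring.
  rewrite normrM.
  have w0 : `|x0 ord0 k - ft| <= Mx + M.
    apply: le_trans (ler_normB _ _) _; apply: lerD; [exact: hx | exact: HM].
  have hK : e / (Mx + M + 1) * (Mx + M + 1) = e by field; rewrite gt_eqF.
  have := normr_ge0 (1 - u); have := normr_ge0 (x0 ord0 k - ft).
  nra.
have b0 : 0 < 1 - s ord0 ord0 by rewrite subr_gt0 lt_def eq_sym s1 s0le.
set be := 1 - s ord0 ord0.
have beE : be = 1 - s ord0 ord0 by [].
clearbody be.
have Dg := gmap_simplex Ds s1.
have e20 : 0 < e / 2 by rewrite divr_gt0.
have [df df0 hf] := ef _ Dg (e / 2) e20.
pose del := minr (be / 2) (minr (df * (be * be) / 8) (e / (2 * (Mx + M + 1)))).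
have del0 : 0 < del.
  rewrite /del !lt_min; apply/andP; split; last (apply/andP; split).
  - by apply: divr_gt0; rewrite // beE.
  - by apply: divr_gt0 => //; rewrite !mulr_gt0 // beE.
  - by apply: divr_gt0 => //; rewrite mulr_gt0.
have hd1 : del <= be / 2 by rewrite /del ge_min lexx.
have hd2 : del <= df * (be * be) / 8.
  by rewrite /del ge_min; apply/orP; right; rewrite ge_min lexx.
have hd3 : del <= e / (2 * (Mx + M + 1)).
  by rewrite /del ge_min; apply/orP; right; rewrite ge_min lexx orbT.
exists del => //.
move=> t Dt ht k; rewrite /coneF !restrictE // !coneG_coord.
have h0 := ht ord0.
have t0le := simplex_le1 ord0 Dt.
set t0 := t ord0 ord0 in h0 t0le *.
have bt : be / 2 <= 1 - t0.
  by move: h0; rewrite ltr_norml; lra.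
have t1 : t0 != 1 by apply/eqP => t01; move: bt; rewrite t01 subrr; lra.
have hg : forall i, `|gmap s ord0 i - gmap t ord0 i| < df.
  move=> i; rewrite !gmap_coord.
  have bl1 : be <= 1 by lra.
  have bpos : 0 < be by rewrite beE.
  have hbb : `|be - (1 - t0)| < del.
    have -> : be - (1 - t0) = t0 - s ord0 ord0 by rewrite beE; ring.
    by rewrite distrC.
  have h := @quot_close (s ord0 (lift ord0 i)) (t ord0 (lift ord0 i)) be (1 - t0) del
    (ltac:(by rewrite simplex_ge0 ?simplex_le1)) (ltac:(by rewrite bpos bl1)) bt (ht _) hbb.
  rewrite -beE; apply: le_lt_trans h _.
  have bb : 0 < be * be by rewrite mulr_gt0.
  rewrite ltr_pdivrMr //.
  have : df * (be * be) / 8 * 8 = df * (be * be) by field.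
  nra.
have hfk := hf _ (gmap_simplex Dt t1) hg k.
set fsk := f (gmap s) ord0 k in hfk *; set ft := f (gmap t) ord0 k in hfk *.
rewrite -beE.
have -> : s ord0 ord0 * x0 ord0 k + be * fsk - (t0 * x0 ord0 k + (1 - t0) * ft)
   = (s ord0 ord0 - t0) * (x0 ord0 k - ft) + be * (fsk - ft) by rewrite beE; ring.
apply: le_lt_trans (ler_normD _ _) _; rewrite !normrM.
have w0 : `|x0 ord0 k - ft| <= Mx + M.
  apply: le_trans (ler_normB _ _) _; apply: lerD; [exact: hx | exact: HM].
have hK : e / (2 * (Mx + M + 1)) * (2 * (Mx + M + 1)) = e by field; rewrite gt_eqF.
have bl1 : `|be| <= 1 by rewrite ger0_norm; lra.
have := normr_ge0 (s ord0 ord0 - t0); have := normr_ge0 (x0 ord0 k - ft).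
have := normr_ge0 (fsk - ft); have := normr_ge0 be.
nra.
Qed.

Lemma coneF_sing d n (X : set 'rV[RR]_d) x0 (f : 'rV[RR]_n.+1 -> 'rV[RR]_d) :
  convex_set X -> X x0 -> is_sing_simplex X f -> is_sing_simplex X (coneF x0 f).
Proof.
move=> cX Xx0 fs; split; first exact: coneF_cont fs.
split; first exact: coneF_X.
by move=> s Ds; rewrite /coneF restrictN.
Qed.

Lemma lift_lift0 k (j : 'I_k.+1) : lift (lift ord0 j) ord0 = ord0 :> 'I_k.+2.
Proof. by apply: val_inj. Qed.

Lemma lift0_lift k (j : 'I_k.+2) (i : 'I_k.+1) :
  lift ord0 (lift j i) = lift (lift ord0 j) (lift ord0 i).
Proof. apply: val_inj; rewrite /= /bump /= !add1n ltnS; by case: (j <= i)%N. Qed.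

Lemma tl_facemap0 n (x : 'rV[RR]_n.+1) : tl (facemap ord0 x) = x.
Proof. by apply/rowP => i; rewrite mxE facemap_lift. Qed.

Lemma tl_facemapS n (j : 'I_n.+2) (x : 'rV[RR]_n.+2) :
  tl (facemap (lift ord0 j) x) = facemap j (tl x).
Proof.
apply/rowP => i; rewrite mxE.
case: (unliftP j i) => [i' ->|->].
  by rewrite lift0_lift !facemap_lift mxE.
by rewrite !facemap_j.
Qed.

Lemma coneF_face0 d n x0 (f : 'rV[RR]_n.+1 -> 'rV[RR]_d) :
  (forall x, ~ stdsimplex n x -> f x = 0) -> face (coneF x0 f) ord0 = f.
Proof.
move=> fN; apply/funext => x; rewrite /face.
case: (pselect (stdsimplex n x)) => Dx; last by rewrite restrictN // fN.
rewrite restrictE // /coneF restrictE; last exact: facemap_simplex.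
rewrite /coneG /gmap tl_facemap0 facemap_j subr0 invr1 !scale1r scale0r add0r.
done.
Qed.

Lemma coneF_faceS d n x0 (f : 'rV[RR]_n.+2 -> 'rV[RR]_d) (j : 'I_n.+2) :
  face (coneF x0 f) (lift ord0 j) = coneF x0 (face f j).
Proof.
apply/funext => x; rewrite /face.
case: (pselect (stdsimplex n.+1 x)) => Dx; last by rewrite restrictN // /coneF restrictN.
rewrite restrictE // /coneF restrictE; last exact: facemap_simplex.
rewrite restrictE // /coneG /gmap tl_facemapS.
have -> : facemap (lift ord0 j) x ord0 ord0 = x ord0 ord0.
  by have := facemap_lift (lift ord0 j) x ord0; rewrite lift_lift0.
rewrite -facemapZ.
case: (eqVneq (x ord0 ord0) 1) => [->|x1]; first by rewrite subrr !scale0r.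
by rewrite (restrictE _ (gmap_simplex Dx x1)).
Qed.

Lemma coneF_face1 d x0 (f : 'rV[RR]_1 -> 'rV[RR]_d) :
  face (coneF x0 f) (lift ord0 ord0) = @kap d 0 x0.
Proof.
apply/funext => x; rewrite /face /kap.
case: (pselect (stdsimplex 0 x)) => Dx; last by rewrite !restrictN.
rewrite !restrictE // /coneF restrictE; last exact: facemap_simplex.
have x1 : x ord0 ord0 = 1 by have := Dx.2; rewrite big_ord1.
have h : facemap (lift ord0 ord0) x ord0 ord0 = 1.
  have := facemap_lift (lift ord0 (ord0 : 'I_1)) x ord0.
  by rewrite lift_lift0 x1.
by rewrite /coneG h subrr scale0r scale1r addr0.
Qed.

Definition scal d (a : CC) (c : chain d) : chain d := [seq (a * p.1, p.2) | p <- c].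
Definition wsum d (F : simplex d -> CC) (c : chain d) : CC := \sum_(p <- c) p.1 * F p.2.
Definition eps d (c : chain d) : CC := \sum_(p <- c) p.1.

Lemma ccoef_nil d (s : simplex d) : coef [::] s = 0.
Proof. by rewrite /coef big_nil. Qed.

Lemma ccoef_cat d (c1 c2 : chain d) s : coef (c1 ++ c2) s = coef c1 s + coef c2 s.
Proof. by rewrite /coef big_cat. Qed.

Lemma ccoef_cons d (p : CC * simplex d) c s :
  coef (p :: c) s = (if `[< p.2 = s >] then p.1 else 0) + coef c s.
Proof. by rewrite /coef big_cons. Qed.

Lemma ccoef_scal d a (c : chain d) s : coef (scal a c) s = a * coef c s.
Proof.
rewrite /coef big_map mulr_sumr; apply: eq_bigr => p _ /=.
by case: ifP; rewrite ?mulr0.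
Qed.

Lemma coef_wsum d (c : chain d) s :
  coef c s = wsum (fun s' => if `[< s' = s >] then 1 else 0) c.
Proof. by apply: eq_bigr => p _; case: ifP; rewrite ?mulr1 ?mulr0. Qed.

Lemma wsum_cat d F (c1 c2 : chain d) : wsum F (c1 ++ c2) = wsum F c1 + wsum F c2.
Proof. by rewrite /wsum big_cat. Qed.

Lemma wsum_scal d F a (c : chain d) : wsum F (scal a c) = a * wsum F c.
Proof. by rewrite /wsum big_map mulr_sumr; apply: eq_bigr => p _ /=; rewrite mulrA. Qed.

Lemma wsum_zero d F (c : chain d) : (forall s, coef c s = 0) -> wsum F c = 0.
Proof.
move: {2}(size c) (leqnn (size c)) => k; elim: k c => [|k IH] c.
  by rewrite leqn0 => /nilP -> _; rewrite /wsum big_nil.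
case: c => [|p c']; first by rewrite /wsum big_nil.
move=> /= hs hc.
set P := fun r : CC * simplex d => `[< r.2 = p.2 >].
rewrite /wsum (bigID P) /=.
have -> : \sum_(r <- p :: c' | P r) r.1 * F r.2 = \sum_(r <- p :: c' | P r) r.1 * F p.2.
  by apply: eq_bigr => r /asboolP ->.
rewrite -mulr_suml.
have -> : \sum_(r <- p :: c' | P r) r.1 = coef (p :: c') p.2.
  by rewrite /coef big_mkcond.
rewrite hc mul0r add0r -big_filter.
apply: IH.
  rewrite size_filter /= {1}/P asboolT //= add0n.
  by apply: leq_trans (count_size _ _) _.
move=> s; rewrite /coef big_filter.
case: (pselect (s = p.2)) => [->|ns].
  by apply: big1 => r /negP hr; case: ifP => // /asboolP e; exfalso; apply: hr; apply/asboolP.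
rewrite -[RHS](hc s) /coef [RHS](bigID P) /= [X in _ = X + _]big1 ?add0r //.
move=> r /asboolP e; case: ifP => // /asboolP e'; exfalso; apply: ns; by rewrite -e'.
Qed.

Lemma wsum_eq d F (c c' : chain d) : chain_eq c c' -> wsum F c = wsum F c'.
Proof.
move=> h; apply/eqP; rewrite -subr_eq0; apply/eqP.
have -> : wsum F c - wsum F c' = wsum F (c ++ scal (-1) c').
  by rewrite wsum_cat wsum_scal mulN1r.
apply: wsum_zero => s; rewrite ccoef_cat ccoef_scal h; ring.
Qed.

Lemma ceq_refl d (c : chain d) : chain_eq c c.
Proof. by []. Qed.
Lemma ceq_sym d (c c' : chain d) : chain_eq c c' -> chain_eq c' c.
Proof. by move=> h s; rewrite h. Qed.
Lemma ceq_trans d (c1 c2 c3 : chain d) : chain_eq c1 c2 -> chain_eq c2 c3 -> chain_eq c1 c3.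
Proof. by move=> h1 h2 s; rewrite h1 h2. Qed.
Lemma ceq_cat d (c1 c2 c1' c2' : chain d) : chain_eq c1 c1' -> chain_eq c2 c2' ->
  chain_eq (c1 ++ c2) (c1' ++ c2').
Proof. by move=> h1 h2 s; rewrite !ccoef_cat h1 h2. Qed.
Lemma ceq_scal d a (c c' : chain d) : chain_eq c c' -> chain_eq (scal a c) (scal a c').
Proof. by move=> h s; rewrite !ccoef_scal h. Qed.
Lemma scal_cat d a (c c' : chain d) : scal a (c ++ c') = scal a c ++ scal a c'.
Proof. exact: map_cat. Qed.
Lemma scal_scal d a b (c : chain d) : chain_eq (scal a (scal b c)) (scal (a * b) c).
Proof. by move=> s; rewrite !ccoef_scal mulrA. Qed.
Lemma scal1 d (c : chain d) : chain_eq (scal 1 c) c.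
Proof. by move=> s; rewrite ccoef_scal mul1r. Qed.
Lemma scal_nil d a : scal a ([::] : chain d) = [::].
Proof. by []. Qed.

Lemma eps_wsum d (c : chain d) : eps c = wsum (fun _ => 1) c.
Proof. by apply: eq_bigr => p _; rewrite mulr1. Qed.
Lemma eps_eq d (c c' : chain d) : chain_eq c c' -> eps c = eps c'.
Proof. by move=> h; rewrite !eps_wsum; apply: wsum_eq. Qed.
Lemma eps_cat d (c c' : chain d) : eps (c ++ c') = eps c + eps c'.
Proof. by rewrite /eps big_cat. Qed.
Lemma eps_scal d a (c : chain d) : eps (scal a c) = a * eps c.
Proof. by rewrite !eps_wsum wsum_scal. Qed.
Lemma eps_nil d : eps ([::] : chain d) = 0.
Proof. by rewrite /eps big_nil. Qed.

Lemma bd_cat q d (c c' : chain d) : bd q (c ++ c') = bd q c ++ bd q c'.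
Proof. by rewrite /bd map_cat flatten_cat. Qed.

Lemma bd_nil q d : bd q ([::] : chain d) = [::].
Proof. by []. Qed.

Lemma coef_bd q d (c : chain d) t :
  coef (bd q c) t = \sum_(p <- c) coef (bd_simplex q p.1 p.2) t.
Proof. by rewrite /coef /bd big_flatten big_map. Qed.

Lemma coef_bd_simplex q d a (s : simplex d) t :
  coef (bd_simplex q a s) t = a * coef (bd_simplex q 1 s) t.
Proof.
case: s => [[|n] f] /=; first by rewrite /coef !big_nil mulr0.
rewrite /coef !big_map mulr_sumr; apply: eq_bigr => j _ /=.
by case: ifP; rewrite ?mulr0 ?mul1r.
Qed.

Lemma coef_bd_wsum q d (c : chain d) t :
  coef (bd q c) t = wsum (fun s => coef (bd_simplex q 1 s) t) c.
Proof. by rewrite coef_bd; apply: eq_bigr => p _; rewrite coef_bd_simplex. Qed.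

Lemma bd_eq q d (c c' : chain d) : chain_eq c c' -> chain_eq (bd q c) (bd q c').
Proof. by move=> h t; rewrite !coef_bd_wsum; apply: wsum_eq. Qed.

Lemma bd_scal q d a (c : chain d) : chain_eq (bd q (scal a c)) (scal a (bd q c)).
Proof. by move=> t; rewrite ccoef_scal !coef_bd_wsum wsum_scal. Qed.

Lemma iter_bd_cat q d k (c c' : chain d) :
  iter k (@bd q d) (c ++ c') = iter k (@bd q d) c ++ iter k (@bd q d) c'.
Proof. by elim: k => //= k ->; rewrite bd_cat. Qed.

Lemma iter_bd_nil q d k : iter k (@bd q d) ([::] : chain d) = [::].
Proof. by elim: k => //= k ->. Qed.

Lemma iter_bd_eq q d k (c c' : chain d) : chain_eq c c' ->
  chain_eq (iter k (@bd q d) c) (iter k (@bd q d) c').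
Proof. by elim: k => //= k IH h; apply: bd_eq; apply: IH. Qed.

Lemma iter_bd_scal q d k a (c : chain d) :
  chain_eq (iter k (@bd q d) (scal a c)) (scal a (iter k (@bd q d) c)).
Proof.
elim: k => //= k IH; apply: ceq_trans (bd_eq q IH) _; exact: bd_scal.
Qed.

Lemma iter_bdSr q d k (c : chain d) : iter k.+1 (@bd q d) c = iter k (@bd q d) (bd q c).
Proof. exact: iterSr. Qed.

Lemma iter_bd_add q d k l (c : chain d) :
  iter (k + l) (@bd q d) c = iter k (@bd q d) (iter l (@bd q d) c).
Proof. exact: iterD. Qed.

Lemma ceq_nil_cat d (c c' : chain d) : chain_eq c [::] -> chain_eq c' [::] ->
  chain_eq (c ++ c') [::].
Proof. by move=> h h' s; rewrite ccoef_cat h h' !ccoef_nil addr0. Qed.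

Lemma zmapE (p : {poly int}) : map_poly (fun k : int => k%:~R) p = map_poly (intmul (1 : CC)) p.
Proof. by []. Qed.

Lemma inZqD q x y : inZq q x -> inZq q y -> inZq q (x + y).
Proof.
move=> [p ->] [r ->]; exists (p + r); rewrite !zmapE rmorphD /= hornerD //.
Qed.
Lemma inZqM q x y : inZq q x -> inZq q y -> inZq q (x * y).
Proof.
move=> [p ->] [r ->]; exists (p * r); rewrite !zmapE rmorphM /= hornerM //.
Qed.
Lemma inZqN q x : inZq q x -> inZq q (- x).
Proof.
move=> [p ->]; exists (- p); rewrite !zmapE rmorphN /= hornerN //.
Qed.
Lemma inZq0 q : inZq q 0.
Proof. by exists 0; rewrite zmapE rmorph0 horner0. Qed.
Lemma inZq1 q : inZq q 1.
Proof. by exists 1; rewrite zmapE rmorph1 hornerC. Qed.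
Lemma inZqX q : inZq q q.
Proof. by exists 'X; rewrite zmapE map_polyX hornerX. Qed.

Lemma inZqXn q n : inZq q (q ^+ n).
Proof. elim: n => [|n IH]; first exact: inZq1. by rewrite exprS; apply: inZqM => //; exact: inZqX. Qed.

Lemma inZq_sum q (I : Type) (r : seq I) (P : pred I) (F : I -> CC) :
  (forall i, P i -> inZq q (F i)) -> inZq q (\sum_(i <- r | P i) F i).
Proof.
move=> h; elim/big_ind: _ => //; [exact: inZq0 | exact: inZqD].
Qed.

Lemma inZq_prod q (I : Type) (r : seq I) (P : pred I) (F : I -> CC) :
  (forall i, P i -> inZq q (F i)) -> inZq q (\prod_(i <- r | P i) F i).
Proof.
move=> h; elim/big_ind: _ => //; [exact: inZq1 | exact: inZqM].
Qed.

Lemma inZq_qnum q k : inZq q (qnum q k).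
Proof. by apply: inZq_sum => i _; exact: inZqXn. Qed.

Lemma qnumS q k : qnum q k.+1 = qnum q k + q ^+ k.
Proof. by rewrite /qnum big_ord_recr. Qed.

Lemma qnum0 q : qnum q 0 = 0.
Proof. by rewrite /qnum big_ord0. Qed.

Lemma qnum1 q : qnum q 1 = 1.
Proof. by rewrite qnumS qnum0 add0r expr0. Qed.

Lemma qnumD q a b : qnum q (a + b) = qnum q a + q ^+ a * qnum q b.
Proof.
elim: b => [|b IH]; first by rewrite addn0 qnum0 mulr0 addr0.
by rewrite addnS !qnumS IH mulrDr exprD addrA.
Qed.

Lemma qnumM q a b : qnum q (a * b) = qnum q a * \sum_(i < b) q ^+ (a * i).
Proof.
elim: b => [|b IH]; first by rewrite muln0 qnum0 big_ord0 mulr0.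
by rewrite mulnS addnC qnumD IH big_ord_recr /=; ring.
Qed.

Lemma qnum_mul1q q n : (1 - q) * qnum q n = 1 - q ^+ n.
Proof.
elim: n => [|n IH]; first by rewrite qnum0 mulr0 expr0 subrr.
by rewrite qnumS mulrDr IH exprS; ring.
Qed.

Lemma qnumN0 q N : q ^+ N = 1 -> q != 1 -> qnum q N = 0.
Proof.
move=> qN q1; have := qnum_mul1q q N; rewrite qN subrr => /eqP.
by rewrite mulf_eq0 subr_eq0 eq_sym (negbTE q1) => /eqP.
Qed.

Lemma qnum_dvd q N n : q ^+ N = 1 -> q != 1 -> (N %| n)%N -> qnum q n = 0.
Proof.
move=> qN q1 /dvdnP [t ->]; rewrite mulnC qnumM qnumN0 // mul0r //.
Qed.

Lemma qnum_unit q N k : prime N -> q ^+ N = 1 -> q != 1 -> (0 < k < N)%N ->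
  exists w, inZq q w /\ qnum q k * w = 1.
Proof.
move=> pN qN q1 /andP [k0 kN].
have cop : coprime k N.
  rewrite coprime_sym prime_coprime //; apply/negP => /(dvdn_leq k0).
  by rewrite leqNgt kN.
have N0 : (0 < N)%N by apply: prime_gt0.
have [a _ hd] := Bezoutr k N0.
move: hd; rewrite (eqP cop) => hd.
have := qnum_dvd qN q1 hd; rewrite qnumD qnum1 expr1 mulnC qnumM.
move=> h; exists (- (q * \sum_(i < a) q ^+ (k * i))); split.
  apply: inZqN; apply: inZqM; first exact: inZqX.
  by apply: inZq_sum => i _; exact: inZqXn.
move: h; set S := \sum_(i < a) _ => h.
have -> : qnum q k * - (q * S) = 1 - (1 + q * (qnum q k * S)) by ring.
by rewrite h subr0.
Qed.

Definition coneS d (x0 : 'rV[RR]_d) (s : simplex d) : simplex d :=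
  existT _ (projT1 s).+1 (coneF x0 (projT2 s)).
Definition cone d (x0 : 'rV[RR]_d) (c : chain d) : chain d :=
  [seq (p.1, coneS x0 p.2) | p <- c].
Definition kapS d (x0 : 'rV[RR]_d) (k : nat) : simplex d := existT _ k (@kap d k x0).

Lemma coef_bds q d n a (F : 'I_n.+2 -> simplex d) t :
  coef [seq (a * q ^+ j, F j) | j : 'I_n.+2] t =
  \sum_(j < n.+2) (if `[< F j = t >] then a * q ^+ j else 0).
Proof. by rewrite /coef big_map big_enum. Qed.

Lemma bd_cone_simplex q d (x0 : 'rV[RR]_d) n (f : 'rV[RR]_n.+2 -> 'rV[RR]_d) a t :
  (forall x, ~ stdsimplex n.+1 x -> f x = 0) ->
  coef (bd_simplex q a (coneS x0 (existT _ n.+1 f))) t =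
  (if `[< existT _ n.+1 f = t >] then a else 0) +
  q * coef (cone x0 (bd_simplex q a (existT _ n.+1 f))) t.
Proof.
move=> fN; rewrite /= /cone /coef !big_map -!/(index_enum _) big_ord_recl /=.
rewrite coneF_face0 // expr0 mulr1 mulr_sumr; congr (_ + _).
apply: eq_bigr => j _; rewrite /coneS /= coneF_faceS.
by case: ifP; rewrite ?mulr0 // exprS mulrCA.
Qed.

Lemma bd_cone_simplex0 q d (x0 : 'rV[RR]_d) (f : 'rV[RR]_1 -> 'rV[RR]_d) a t :
  (forall x, ~ stdsimplex 0 x -> f x = 0) ->
  coef (bd_simplex q a (coneS x0 (existT _ 0%N f))) t =
  (if `[< existT _ 0%N f = t >] then a else 0) +
  (if `[< kapS x0 0 = t >] then a * q else 0).
Proof.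
move=> fN; rewrite /= /coef !big_map -!/(index_enum _) big_ord_recl /=.
rewrite coneF_face0 // expr0 mulr1 big_ord1 /= coneF_face1 expr1.
done.
Qed.

Lemma coef_flatten d (ss : seq (chain d)) t : coef (flatten ss) t = \sum_(x <- ss) coef x t.
Proof. by rewrite /coef big_flatten. Qed.

Lemma coef_cone d x0 (c : chain d) t :
  coef (cone x0 c) t = \sum_(p <- c) (if `[< coneS x0 p.2 = t >] then p.1 else 0).
Proof. by rewrite /coef big_map. Qed.

Lemma cone_cat d x0 (c c' : chain d) : cone x0 (c ++ c') = cone x0 c ++ cone x0 c'.
Proof. exact: map_cat. Qed.

Lemma cone_scal d x0 a (c : chain d) : cone x0 (scal a c) = scal a (cone x0 c).
Proof. by rewrite /cone /scal -!map_comp. Qed.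

Lemma cone_eq d x0 (c c' : chain d) : chain_eq c c' -> chain_eq (cone x0 c) (cone x0 c').
Proof.
move=> h t; rewrite !coef_cone.
have E : forall c0 : chain d, \sum_(p <- c0) (if `[< coneS x0 p.2 = t >] then p.1 else 0)
  = wsum (fun s => if `[< coneS x0 s = t >] then 1 else 0) c0.
  by move=> c0; apply: eq_bigr => p _; case: ifP; rewrite ?mulr1 ?mulr0.
by rewrite !E; apply: wsum_eq.
Qed.

Lemma inC_nil q d (X : set 'rV[RR]_d) n : in_C q X n [::].
Proof. by []. Qed.

Lemma inC_cat q d (X : set 'rV[RR]_d) n c c' :
  in_C q X n c -> in_C q X n c' -> in_C q X n (c ++ c').
Proof. by move=> h h' p; rewrite mem_cat => /orP [/h|/h']. Qed.

Lemma inC_scal q d (X : set 'rV[RR]_d) n a c :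
  inZq q a -> in_C q X n c -> in_C q X n (scal a c).
Proof.
move=> ha h p /mapP [p' /h [h1 [h2 h3]] ->]; split => //.
exact: inZqM.
Qed.

Lemma inC_cone q d (X : set 'rV[RR]_d) x0 (k : nat) c :
  convex_set X -> X x0 -> in_C q X k c -> in_C q X k.+1 (cone x0 c).
Proof.
move=> cX Xx0 h p /mapP [p' /h [h1 [h2 h3]] ->]; split => //; split.
  by move: h2; rewrite /sdeg /coneS /= => /eqP; rewrite eqz_nat => /eqP ->.
exact: coneF_sing.
Qed.

Lemma inC_deg q d (X : set 'rV[RR]_d) (k : nat) c p :
  in_C q X k c -> p \in c -> projT1 p.2 = k.
Proof. by move=> h /h [_ [/eqP + _]]; rewrite eqz_nat => /eqP. Qed.

Lemma inC_bd q d (X : set 'rV[RR]_d) (k : nat) c :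
  in_C q X k.+1 c -> in_C q X k (bd q c).
Proof.
move=> h p /flattenP [x /mapP [[a [n f]] pc ->]] px.
have [ha [hn hs]] := h _ pc.
have nk : n = k.+1 by move/eqP: hn; rewrite eqz_nat => /eqP.
subst n; move: px => /= /mapP [j _ ->] /=; split.
  by apply: inZqM => //; exact: inZqXn.
by split => //; apply: face_sing.
Qed.

Lemma bd_deg0 q d (X : set 'rV[RR]_d) c : in_C q X 0 c -> bd q c = [::].
Proof.
elim: c => // -[a [n f]] c IH h.
rewrite /bd /= -/(bd q c) IH; last by move=> p pc; apply: h; rewrite inE pc orbT.
have := inC_deg h (mem_head _ _); rewrite /= => n0; subst n; by [].
Qed.

Lemma inC_iter q d (X : set 'rV[RR]_d) (k l : nat) c :
  in_C q X (k + l)%N c -> in_C q X k (iter l (@bd q d) c).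
Proof.
elim: l k => [|l IH] k /=; first by rewrite addn0.
move=> h; apply: inC_bd; apply: IH; by rewrite addSnnS.
Qed.

Lemma inC_kap q d (X : set 'rV[RR]_d) x0 (k : nat) b :
  X x0 -> inZq q b -> in_C q X k [:: (b, kapS x0 k)].
Proof.
move=> Xx0 hb p; rewrite inE => /eqP -> /=; split => //; split => //.
exact: kap_sing.
Qed.

Lemma bd_kap q d (x0 : 'rV[RR]_d) (k : nat) b :
  chain_eq (bd q [:: (b, kapS x0 k.+1)]) [:: (b * qnum q k.+2, kapS x0 k)].
Proof.
move=> t; rewrite /bd /= cats0 /coef !big_map -/(index_enum _) big_cons big_nil addr0.
rewrite /kapS; under eq_bigr do rewrite face_kap.
case: ifP => _; last by rewrite big1.
by rewrite /qnum mulr_sumr.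
Qed.

Lemma coef_cone_bd q d x0 (c : chain d) t :
  coef (cone x0 (bd q c)) t = \sum_(p <- c) coef (cone x0 (bd_simplex q p.1 p.2)) t.
Proof.
rewrite coef_cone /bd big_flatten big_map; apply: eq_bigr => p _.
by rewrite coef_cone.
Qed.

Lemma cone_rel q d (X : set 'rV[RR]_d) x0 (k : nat) c : in_C q X k.+1 c ->
  chain_eq (bd q (cone x0 c)) (c ++ scal q (cone x0 (bd q c))).
Proof.
move=> h t; rewrite coef_bd ccoef_cat ccoef_scal coef_cone_bd /cone big_map.
rewrite [coef c t]/coef mulr_sumr -big_split /=.
apply: eq_big_seq => -[a [n f]] pc.
have [_ [hn [_ [_ fN]]]] := h _ pc.
have nk : n = k.+1 by move/eqP: hn; rewrite eqz_nat => /eqP.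
subst n; exact: bd_cone_simplex.
Qed.

Lemma cone_rel0 q d (X : set 'rV[RR]_d) x0 c : in_C q X 0 c ->
  chain_eq (bd q (cone x0 c)) (c ++ [:: (q * eps c, kapS x0 0)]).
Proof.
move=> h t; rewrite coef_bd ccoef_cat ccoef_cons ccoef_nil addr0 /cone big_map.
rewrite [coef c t]/coef /eps.
have -> : (if `[< (q * \sum_(p <- c) p.1, kapS x0 0).2 = t >]
      then (q * \sum_(p <- c) p.1, kapS x0 0).1 else 0)
   = \sum_(p <- c) (if `[< kapS x0 0 = t >] then p.1 * q else 0).
  rewrite /=; case: ifP => _; last by rewrite big1.
  by rewrite mulr_sumr; apply: eq_bigr => p _; rewrite mulrC.
rewrite -big_split /=.
apply: eq_big_seq => -[a [n f]] pc.
have [_ [hn [_ [_ fN]]]] := h _ pc.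
have nk : n = 0%N by move/eqP: hn; rewrite eqz_nat => /eqP.
subst n; exact: bd_cone_simplex0.
Qed.

Lemma cat_scal d a (y : chain d) : chain_eq (y ++ scal a y) (scal (1 + a) y).
Proof. by move=> t; rewrite ccoef_cat !ccoef_scal mulrDl mul1r. Qed.

Lemma ceq_cat_nil d (c : chain d) : chain_eq (c ++ [::]) c.
Proof. by rewrite cats0. Qed.

Lemma inC_iter_cone q d (X : set 'rV[RR]_d) x0 (k j : nat) c :
  convex_set X -> X x0 -> in_C q X k c -> in_C q X (k + j)%N (iter j (cone x0) c).
Proof.
move=> cX Xx0 h; elim: j => [|j IH]; first by rewrite addn0.
by rewrite addnS /=; apply: inC_cone.
Qed.

Lemma DK q d (X : set 'rV[RR]_d) x0 (k : nat) c :
  convex_set X -> X x0 -> in_C q X k c -> chain_eq (bd q c) [::] ->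
  (k = 0%N -> eps c = 0) ->
  forall j, chain_eq (bd q (iter j.+1 (cone x0) c)) (scal (qnum q j.+1) (iter j (cone x0) c)).
Proof.
move=> cX Xx0 h hb he; elim => [|j IH] /=.
  rewrite qnum1; apply: ceq_trans (ceq_sym (scal1 c)).
  case: k h he => [|k] h he.
    apply: ceq_trans (cone_rel0 x0 h) _.
    rewrite he // mulr0 => t; rewrite ccoef_cat ccoef_cons ccoef_nil /=.
    by case: ifP; rewrite !addr0.
  apply: ceq_trans (cone_rel x0 h) _.
  apply: ceq_trans (ceq_cat (ceq_refl c) (ceq_scal q (cone_eq x0 hb))) _.
  by rewrite /= cats0.
have hj : in_C q X (k + j).+1 (iter j.+1 (cone x0) c).
  by rewrite -addnS; apply: inC_iter_cone.
apply: ceq_trans (cone_rel x0 hj) _.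
apply: ceq_trans (ceq_cat (ceq_refl _) (ceq_scal q (cone_eq x0 IH))) _.
rewrite cone_scal /=.
apply: ceq_trans (ceq_cat (ceq_refl _) (scal_scal _ _ _)) _.
apply: ceq_trans (cat_scal _ _) _.
by rewrite (qnumD q 1 j.+1) qnum1 expr1.
Qed.

Definition qfact q j := \prod_(i < j) qnum q i.+1.

Lemma DjKj q d (X : set 'rV[RR]_d) x0 (k : nat) c :
  convex_set X -> X x0 -> in_C q X k c -> chain_eq (bd q c) [::] ->
  (k = 0%N -> eps c = 0) ->
  forall j, chain_eq (iter j (@bd q d) (iter j (cone x0) c)) (scal (qfact q j) c).
Proof.
move=> cX Xx0 h hb he; elim => [|j IH].
  by rewrite /qfact big_ord0 /=; apply: ceq_sym; apply: scal1.
rewrite iter_bdSr.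
apply: ceq_trans (iter_bd_eq _ _ (DK cX Xx0 h hb he j)) _.
apply: ceq_trans (iter_bd_scal _ _ _ _) _.
apply: ceq_trans (ceq_scal _ IH) _.
apply: ceq_trans (scal_scal _ _ _) _.
by rewrite /qfact big_ord_recr /= mulrC.
Qed.

Lemma qfact_unit q N j : prime N -> q ^+ N = 1 -> q != 1 -> (j < N)%N ->
  exists u, inZq q u /\ qfact q j * u = 1.
Proof.
move=> pN qN q1; elim: j => [|j IH] hj.
  by exists 1; split; [exact: inZq1 | rewrite /qfact big_ord0 mulr1].
have [u [hu hu1]] := IH (ltnW hj).
have [w [hw hw1]] := qnum_unit pN qN q1 (ltac:(by rewrite ltn0Sn hj) : (0 < j.+1 < N)%N).
exists (u * w); split; first exact: inZqM.
rewrite /qfact big_ord_recr /= -/(qfact q j).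
by rewrite mulrACA hu1 hw1 mulr1.
Qed.

Lemma inC_eps q d (X : set 'rV[RR]_d) n c : in_C q X n c -> inZq q (eps c).
Proof.
move=> h; rewrite /eps big_seq_cond; apply: inZq_sum => p /andP [pc _].
by have [] := h _ pc.
Qed.

Lemma eps_bd q d (X : set 'rV[RR]_d) (k : nat) c :
  in_C q X k.+1 c -> eps (bd q c) = qnum q k.+2 * eps c.
Proof.
move=> h; rewrite /eps /bd big_flatten big_map mulr_sumr.
apply: eq_big_seq => -[a [n f]] pc.
have nk := inC_deg h pc; rewrite /= in nk; subst n.
rewrite /= big_map -/(index_enum _) -mulr_sumr mulrC /qnum.
by rewrite big_enum.
Qed.

Lemma base_case q N d (X : set 'rV[RR]_d) x0 (k : nat) c :
  prime N -> q ^+ N = 1 -> q != 1 -> convex_set X -> X x0 ->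
  in_C q X k c -> chain_eq (bd q c) [::] -> (k = 0%N -> eps c = 0) ->
  exists e, in_C q X (k + (N - 1))%N e /\ chain_eq (iter (N - 1)%N (@bd q d) e) c.
Proof.
move=> pN qN q1 cX Xx0 h hb he.
have [u [hu hu1]] := @qfact_unit q N (N - 1)%N pN qN q1 (ltac:(rewrite subn1 prednK ?prime_gt0 //)).
exists (scal u (iter (N - 1)%N (cone x0) c)); split.
  by apply: inC_scal => //; apply: inC_iter_cone.
apply: ceq_trans (iter_bd_scal _ _ _ _) _.
apply: ceq_trans (ceq_scal _ (DjKj cX Xx0 h hb he _)) _.
apply: ceq_trans (scal_scal _ _ _) _.
by rewrite mulrC hu1; exact: scal1.
Qed.

Definition kprod q k := \prod_(i < k) qnum q i.+2.

Lemma iter_bd_kap q d (x0 : 'rV[RR]_d) (k : nat) b :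
  chain_eq (iter k (@bd q d) [:: (b, kapS x0 k)]) [:: (b * kprod q k, kapS x0 0)].
Proof.
elim: k b => [|k IH] b.
  by rewrite /kprod big_ord0 mulr1.
rewrite iter_bdSr.
apply: ceq_trans (iter_bd_eq _ _ (bd_kap q x0 k b)) _.
apply: ceq_trans (IH _) _.
move=> t; rewrite /kprod big_ord_recr /=; congr (coef [:: (_, _)] t); ring.
Qed.

Lemma kprod_unit q N k : prime N -> q ^+ N = 1 -> q != 1 -> (k.+1 < N)%N ->
  exists w, inZq q w /\ kprod q k * w = 1.
Proof.
move=> pN qN q1; elim: k => [|k IH] hk.
  by exists 1; split; [exact: inZq1 | rewrite /kprod big_ord0 mulr1].
have [u [hu hu1]] := IH (ltnW hk).
have [w [hw hw1]] := qnum_unit pN qN q1 (ltac:(by rewrite ltn0Sn hk) : (0 < k.+2 < N)%N).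
exists (u * w); split; first exact: inZqM.
rewrite /kprod big_ord_recr /= -/(kprod q k).
by rewrite mulrACA hu1 hw1 mulr1.
Qed.


Lemma eps_single d a (s : simplex d) : eps [:: (a, s)] = a.
Proof. by rewrite /eps big_cons big_nil addr0. Qed.

Lemma claimE q N d (X : set 'rV[RR]_d) x0 :
  prime N -> q ^+ N = 1 -> q != 1 -> convex_set X -> X x0 ->
  forall m, (m.+1 < N)%N -> forall (k : nat) c, in_C q X k c ->
  chain_eq (iter m.+1 (@bd q d) c) [::] -> (k = m -> eps c = 0) ->
  exists e, in_C q X (k + (N - m.+1))%N e /\ chain_eq (iter (N - m.+1)%N (@bd q d) e) c.
Proof.
move=> pN qN q1 cX Xx0; elim => [|m IH] hm k c h hc he.
  exact: (base_case pN qN q1 cX Xx0 h hc he).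
set r := (N - m.+2)%N.
case: k h hc he => [|k'] h hc he.
  set a := eps c.
  pose c0 := c ++ [:: (- a, kapS x0 0)].
  have h0 : in_C q X 0%N c0.
    apply: inC_cat => //; apply: inC_kap => //; apply: inZqN; exact: inC_eps h.
  have hb0 : chain_eq (bd q c0) [::] by rewrite (bd_deg0 h0).
  have he0 : (0%N = 0%N -> eps c0 = 0) by move=> _; rewrite eps_cat eps_single subrr.
  have [e0 [he0a he0b]] := base_case pN qN q1 cX Xx0 h0 hb0 he0.
  have [w [hw hw1]] := @kprod_unit q N r pN qN q1 (ltac:(rewrite /r; lia)).
  exists (iter m.+1 (@bd q d) e0 ++ [:: (a * w, kapS x0 r)]); split.
    apply: inC_cat; last by apply: inC_kap => //; apply: inZqM => //; exact: inC_eps h.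
    apply: inC_iter.
    have -> : (0 + r + m.+1 = 0 + (N - 1))%N by rewrite /r; lia.
    exact: he0a.
  rewrite iter_bd_cat -iter_bd_add.
  have -> : (r + m.+1 = N - 1)%N by rewrite /r; lia.
  apply: ceq_trans (ceq_cat he0b (iter_bd_kap _ _ _ _)) _.
  move=> t; rewrite /c0 !ccoef_cat !ccoef_cons !ccoef_nil /=.
  case: ifP => _; last by rewrite !addr0.
  by rewrite -mulrA [w * _]mulrC hw1 mulr1 !addr0 subrK.
have h1 := inC_bd h.
have hc1 : chain_eq (iter m.+1 (@bd q d) (bd q c)) [::] by rewrite -iter_bdSr.
have he1 : k' = m -> eps (bd q c) = 0 by move=> e; rewrite (eps_bd h) he ?e ?mulr0.
have [e1 [he1a he1b]] := IH (ltac:(lia)) k' (bd q c) h1 hc1 he1.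
set y := iter r (@bd q d) e1.
have E1 : (k'.+1 + r = k' + (N - m.+1))%N by rewrite /r; lia.
have hy : in_C q X k'.+1 y by apply: inC_iter; rewrite E1.
pose c2 := c ++ scal (-1) y.
have h2 : in_C q X k'.+1 c2.
  apply: inC_cat => //; apply: inC_scal => //; apply: inZqN; exact: inZq1.
have hb2 : chain_eq (bd q c2) [::].
  rewrite /c2 bd_cat.
  apply: ceq_trans (ceq_cat (ceq_refl _) (bd_scal _ _ _)) _.
  have -> : bd q y = iter (N - m.+1)%N (@bd q d) e1.
    by rewrite /y /r; have -> : (N - m.+1 = (N - m.+2).+1)%N by lia.
  move=> t; rewrite ccoef_cat ccoef_scal he1b ccoef_nil; ring.
have [e2 [he2a he2b]] := base_case pN qN q1 cX Xx0 h2 hb2 (ltac:(by [])).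
exists (e1 ++ iter m.+1 (@bd q d) e2); split.
  apply: inC_cat; first by rewrite E1.
  apply: inC_iter; have -> : (k'.+1 + r + m.+1 = k'.+1 + (N - 1))%N by rewrite /r; lia.
  exact: he2a.
rewrite iter_bd_cat -iter_bd_add.
have -> : (r + m.+1 = N - 1)%N by rewrite /r; lia.
apply: ceq_trans (ceq_cat (ceq_refl _) he2b) _.
move=> t; rewrite /c2 !ccoef_cat ccoef_scal; ring.
Qed.

Lemma tpow0 N q j (n : int) : tpow N q j n 0 = 0.
Proof.
elim: j n => [|j IH] n //=; rewrite /tdiff; case: ifP => _; rewrite ?mulr0 IH //.
Qed.

Lemma bd_deg0_single q d a (f : 'rV[RR]_1 -> 'rV[RR]_d) :
  bd q [:: (a, existT _ 0%N f)] = [::].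
Proof. by []. Qed.

Lemma kap_iter_tpow q N d (x0 : 'rV[RR]_d) : forall j (k : nat) a, (j <= k)%N -> (k <= N - 2)%N ->
  chain_eq (iter j (@bd q d) [:: (a, kapS x0 k)]) [:: (tpow N q j k a, kapS x0 (k - j))].
Proof.
elim => [|j IH] k a hj hk; first by rewrite subn0.
case: k hj hk => [|k] // hj hk.
rewrite iter_bdSr.
apply: ceq_trans (iter_bd_eq _ _ (bd_kap q x0 k a)) _.
apply: ceq_trans (IH _ _ _ _) _; [by [] | lia |].
rewrite subSS /=.
have -> : (Posz k.+1 - 1 = Posz k)%R by rewrite -addn1 PoszD addrK.
rewrite /tdiff.
have -> : ((1 <= Posz k.+1) && (Posz k.+1 <= Posz (N - 2)%N))%R.
  by rewrite !lez_nat; apply/andP; split.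
by rewrite /= mulrC.
Qed.

Lemma inC_neg q d (X : set 'rV[RR]_d) (k : nat) c : in_C q X (Negz k) c -> c = [::].
Proof. by case: c => // p c h; have [_ [+ _]] := h p (mem_head _ _). Qed.

Theorem theorem5p2 (N : nat) (q : complex.complex Rdefinitions.R)
    (X : set 'rV[Rdefinitions.R]_(N.-1)) :
  prime N -> (3 <= N)%N -> q ^+ N = 1 -> q != 1 ->
  X !=set0 -> convex_set X ->
  forall (m : nat) (n : int), (1 <= m <= N.-1)%N ->
    eta_homology_iso N q X m n.
Proof.
move=> pN N3 qN q1 [x0 Xx0] cX m n /andP [m1 mN].
split.
- move=> c [hc hcit] [_ [b [hb hbt]]]; split => //.
  case: n hc hcit hb hbt => [k|k] hc hcit hb hbt; last first.
    by rewrite (inC_neg hc); exists [::]; split => //; rewrite iter_bd_nil.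
  case: m m1 mN hcit hb hbt => [|m'] // _ mN hcit hb hbt.
  have hm : (m'.+1 < N)%N by move: mN N3; case: (N) => //= N' _ _; lia.
  have he : k = m' -> eps c = 0.
    move=> km; subst k.
    have b0 : b = 0.
      apply: hb.2; rewrite -PoszD !lez_nat /=; lia.
    move: hbt; rewrite b0 tpow0 /Defs.eta.
    have -> : ((0 <= Posz m') && (Posz m' <= Posz (N - 2)%N))%R.
      by rewrite !lez_nat /=; lia.
    by move=> ->.
  have [e [he1 he2]] := claimE pN qN q1 cX Xx0 hm hc hcit he.
  by exists e; split => //; rewrite -PoszD.
- move=> a [ha hat].
  case: (boolP ((0 <= n) && (n <= Posz (N - 2)%N))%R) => hn; last first.
    have a0 : a = 0 by apply: ha.2; move=> h; rewrite h in hn.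
    exists [::]; split.
      by split => //; rewrite iter_bd_nil.
    rewrite /Defs.eta a0; case: ifP => _; rewrite ?big_nil subr0;
      by split; [split; [exact: inZq0 | by []] | exists 0; split; [split; [exact: inZq0|by []] | exact: tpow0]].
  case: n ha hat hn => [k|k] ha hat hn; last by [].
  have hk : (k <= N - 2)%N by move: hn; rewrite !lez_nat.
  exists [:: (a, kapS x0 k)]; split.
    split; first by apply: inC_kap => //; exact: ha.1.
    case: (leqP m k) => hmk.
      apply: ceq_trans (@kap_iter_tpow q N _ x0 m k a hmk hk) _.
      rewrite hat => t; rewrite ccoef_cons ccoef_nil /=; by case: ifP; rewrite addr0.
    rewrite -(subnK (ltnW hmk)) iter_bd_add.
    apply: ceq_trans (iter_bd_eq _ _ (@kap_iter_tpow q N _ x0 k k a (leqnn k) hk)) _.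
    rewrite subnn.
    have : (0 < m - k)%N by lia.
    case: (m - k)%N => // r _; rewrite iter_bdSr /kapS bd_deg0_single iter_bd_nil.
    by [].
  rewrite /Defs.eta hn big_cons big_nil addr0 subrr.
  by split; [split; [exact: inZq0 | by []] | exists 0; split; [split; [exact: inZq0|by []] | exact: tpow0]].
Qed.
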